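(* Let $(X,\le)$ be a partially ordered set, $(Y,\le)$ a dcpo and $j:X\to Y$ a map. The following are equivalent: (i) $(Y,j)$ is a directed completion of $X$; (ii) $j(X)$ is dense in $Y$ and for every $B\subset X$ such that $j(B)$ has a tip in $Y$, and every $a\in X$, we have $j(a)\in\widehat{j(B)}$ (closure in $Y$) if and only if $a\in\widehat B$ (closure in $X$).
   Context: Let $(X,\le)$ be a partially ordered set. A subset $D\subset X$ is directed if every finite subset of $D$ (including the empty one) has an upper bound in $D$; in particular directed sets are nonempty. $A\subset X$ is a lower set if $x\in A$ and $y\le x$ imply $y\in A$. $(X,\le)$ is a directed complete partial order (dcpo) if every directed subset has a supremum. A subset $A\subset X$ is directed-sup-closed if the supremum of every directed $D\subset A$ which has a supremum in $X$ belongs to $A$. For $A\subset X$, $\overline A$ is the smallest directed-sup-closed subset of $X$ containing $A$, and $\widehat A$ is the smallest subset of $X$ containing $A$ which is both a lower set and directed-sup-closed. $A$ is dense if $\overline A=X$. $A$ has a tip if $\overline A$ has a maximum. A map $T:X_1\to X_2$ between partially ordered sets has the Monotone Convergence Property (Mcp) if for every directed $D\subset X_1$ having a supremum, $T(D)$ has a supremum and $T(\sup D)=\sup T(D)$. A directed completion of $(X,\le)$ is a dcpo $(\overline X,\bar\le)$ together with a map $\iota:X\to\overline X$ with the Mcp such that for every dcpo $Z$ and every map $T:X\to Z$ with the Mcp there is a unique map $\bar T:\overline X\to Z$ with the Mcp satisfying $\bar T\circ\iota=T$. *)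

(* Defs.v *)
From Stdlib Require Import List.

Section Defs.
Context {T : Type} (le : T -> T -> Prop).

Definition is_partial_order : Prop :=
  (forall x, le x x) /\
  (forall x y, le x y -> le y x -> x = y) /\
  (forall x y z, le x y -> le y z -> le x z).

Definition subset (A B : T -> Prop) : Prop := forall x, A x -> B x.

(* every finite subset (given as a list, possibly empty) has an upper bound in D *)
Definition directed (D : T -> Prop) : Prop :=
  forall l : list T, (forall x, In x l -> D x) ->
    exists z, D z /\ (forall x, In x l -> le x z).

Definition is_upper_bound (A : T -> Prop) (u : T) : Prop :=
  forall x, A x -> le x u.

Definition is_sup (A : T -> Prop) (s : T) : Prop :=
  is_upper_bound A s /\ (forall u, is_upper_bound A u -> le s u).

Definition is_dcpo : Prop :=
  is_partial_order /\
  (forall D, directed D -> exists s, is_sup D s).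

Definition lower_set (A : T -> Prop) : Prop :=
  forall x y, A x -> le y x -> A y.

Definition dsup_closed (A : T -> Prop) : Prop :=
  forall D, subset D A -> directed D -> forall s, is_sup D s -> A s.

Definition dclosure (A : T -> Prop) : T -> Prop :=
  fun x => forall C, dsup_closed C -> subset A C -> C x.

(* \widehat A : smallest directed-sup-closed lower set containing A *)
Definition hat_closure (A : T -> Prop) : T -> Prop :=
  fun x => forall C, lower_set C -> dsup_closed C -> subset A C -> C x.

Definition dense (A : T -> Prop) : Prop := forall x, dclosure A x.

Definition has_tip (A : T -> Prop) : Prop :=
  exists m, dclosure A m /\ (forall y, dclosure A y -> le y m).

End Defs.

Definition image {A B : Type} (f : A -> B) (S : A -> Prop) : B -> Prop :=
  fun y => exists x, S x /\ f x = y.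

Definition Mcp {X1 X2 : Type} (le1 : X1 -> X1 -> Prop) (le2 : X2 -> X2 -> Prop)
  (T : X1 -> X2) : Prop :=
  forall D s, directed le1 D -> is_sup le1 D s -> is_sup le2 (image T D) (T s).

Definition directed_completion {X Y : Type} (leX : X -> X -> Prop)
  (leY : Y -> Y -> Prop) (iota : X -> Y) : Prop :=
  is_dcpo leY /\ Mcp leX leY iota /\
  forall (Z : Type) (leZ : Z -> Z -> Prop), is_dcpo leZ ->
  forall T : X -> Z, Mcp leX leZ T ->
    exists Tb : Y -> Z, (Mcp leY leZ Tb /\ forall x, Tb (iota x) = T x) /\
      forall Tb' : Y -> Z, Mcp leY leZ Tb' -> (forall x, Tb' (iota x) = T x) ->
        forall y, Tb' y = Tb y.

(* Main.v *)
Require Import Defs.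
From Stdlib Require Import List.
From Stdlib Require Import Classical PropExtensionality ProofIrrelevance ClassicalEpsilon.

Lemma dcl_sub {T} (le : T -> T -> Prop) A : subset A (dclosure le A).
Proof. intros x Ax C HC HAC; apply HAC; auto. Qed.

Lemma dcl_closed {T} (le : T -> T -> Prop) A : dsup_closed le (dclosure le A).
Proof.
  intros D HD Hdir s Hs C HC HAC. apply (HC D); auto.
  intros x Dx; apply HD; auto.
Qed.

Lemma dcl_min {T} (le : T -> T -> Prop) A C :
  dsup_closed le C -> subset A C -> subset (dclosure le A) C.
Proof. intros HC HAC x Hx. apply Hx; auto. Qed.

Lemma dcl_mono {T} (le : T -> T -> Prop) A A' :
  subset A A' -> subset (dclosure le A) (dclosure le A').
Proof.
  intros H. apply dcl_min; [apply dcl_closed|]. intros x Ax; apply dcl_sub; auto.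
Qed.

Lemma hat_sub {T} (le : T -> T -> Prop) A : subset A (hat_closure le A).
Proof. intros x Ax C HL HC HAC; apply HAC; auto. Qed.

Lemma hat_closed {T} (le : T -> T -> Prop) A : dsup_closed le (hat_closure le A).
Proof.
  intros D HD Hdir s Hs C HL HC HAC. apply (HC D); auto.
  intros x Dx; apply HD; auto.
Qed.

Lemma hat_lower {T} (le : T -> T -> Prop) A : lower_set le (hat_closure le A).
Proof.
  intros x y Hx Hyx C HL HC HAC. apply (HL x y); [apply Hx; auto | auto].
Qed.

Lemma dcl_hat {T} (le : T -> T -> Prop) A : subset (dclosure le A) (hat_closure le A).
Proof. apply dcl_min; [apply hat_closed | apply hat_sub]. Qed.

Lemma down_closed {T} (le : T -> T -> Prop) m : dsup_closed le (fun y => le y m).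
Proof. intros D HD Hdir s [Hu Hl]. apply Hl. intros x Dx; apply HD; auto. Qed.

Lemma down_lower {T} (le : T -> T -> Prop) m :
  (forall x y z, le x y -> le y z -> le x z) -> lower_set le (fun y => le y m).
Proof. intros Ht x y Hx Hyx. eauto. Qed.

Definition tipm {T} (le : T -> T -> Prop) (A : T -> Prop) m :=
  dclosure le A m /\ forall w, dclosure le A w -> le w m.

Lemma tip_hat {T} (le : T -> T -> Prop) A m :
  (forall x y z, le x y -> le y z -> le x z) ->
  tipm le A m -> forall y, hat_closure le A y <-> le y m.
Proof.
  intros Ht [Hm Hmax] y. split.
  - intros H. apply H; [apply down_lower; auto | apply down_closed |].
    intros a Aa. apply Hmax. apply dcl_sub; auto.
  - intros H. apply (hat_lower le A m y); auto. apply dcl_hat; auto.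
Qed.

Lemma tipm_of {T} (le : T -> T -> Prop) A m :
  A m -> (forall a, A a -> le a m) -> tipm le A m.
Proof.
  intros Am H. split; [apply dcl_sub; auto|].
  apply dcl_min; [apply down_closed| exact H].
Qed.

Lemma tipm_has {T} (le : T -> T -> Prop) A m : tipm le A m -> has_tip le A.
Proof. intros H; exists m; exact H. Qed.

Lemma is_sup_ext {T} (le : T -> T -> Prop) A A' s :
  (forall x, A x <-> A' x) -> is_sup le A s -> is_sup le A' s.
Proof.
  intros E [Hu Hl]. split.
  - intros x Hx; apply Hu, E; auto.
  - intros u Hu'; apply Hl. intros x Hx; apply Hu', E; auto.
Qed.

Lemma sup_unique {T} (le : T -> T -> Prop) A s s' :
  (forall x y, le x y -> le y x -> x = y) -> is_sup le A s -> is_sup le A s' -> s = s'.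
Proof.
  intros Ha [Hu Hl] [Hu' Hl']. apply Ha; [apply Hl; auto | apply Hl'; auto].
Qed.

Lemma mcp_mono {X1 X2} (le1 : X1 -> X1 -> Prop) (le2 : X2 -> X2 -> Prop) f :
  (forall x, le1 x x) -> Mcp le1 le2 f -> forall x y, le1 x y -> le2 (f x) (f y).
Proof.
  intros Hr Hf x y Hxy.
  set (D := fun z => z = x \/ z = y).
  assert (Hd : directed le1 D).
  { intros l Hl. exists y. split; [right; auto|]. intros z Hz.
    destruct (Hl z Hz) as [-> | ->]; auto. }
  assert (Hs : is_sup le1 D y).
  { split. intros z [-> | ->]; auto. intros u Hu. apply Hu. right; auto. }
  destruct (Hf D y Hd Hs) as [Hu _]. apply Hu. exists x. split; auto. left; auto.
Qed.

Lemma image_directed {X1 X2} (le1 : X1 -> X1 -> Prop) (le2 : X2 -> X2 -> Prop) f D :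
  (forall x y z, le2 x y -> le2 y z -> le2 x z) ->
  (forall x y, le1 x y -> le2 (f x) (f y)) ->
  directed le1 D -> directed le2 (image f D).
Proof.
  intros Ht Hm HD l. induction l as [|a l IH]; intros Hl.
  - destruct (HD nil) as [z [Dz _]]. intros x [].
    exists (f z). split; [exists z; auto| intros x []].
  - destruct (Hl a (or_introl eq_refl)) as [e [De <-]].
    destruct IH as [z [[d [Dd <-]] Hz]]. intros x Hx; apply Hl; right; auto.
    destruct (HD (e :: d :: nil)) as [w [Dw Hw]].
    intros x [<-|[<-|[]]]; auto.
    exists (f w). split; [exists w; auto|].
    intros x [<-|Hx].
    + apply Hm, Hw. left; auto.
    + apply Ht with (f d); auto. apply Hm, Hw. right; left; auto.
Qed.

Lemma hat_image {X1 X2} (le1 : X1 -> X1 -> Prop) (le2 : X2 -> X2 -> Prop) f B b :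
  (forall x, le1 x x) -> (forall x y z, le2 x y -> le2 y z -> le2 x z) ->
  Mcp le1 le2 f -> hat_closure le1 B b -> hat_closure le2 (image f B) (f b).
Proof.
  intros Hr Ht Hf Hb. apply Hb.
  - intros x y Hx Hyx. apply (hat_lower le2 _ (f x)); auto.
    apply (mcp_mono le1 le2 f Hr Hf); auto.
  - intros D HD Hdir s Hs. apply (hat_closed le2 _ (image f D)).
    + intros w [d [Dd <-]]. apply HD; auto.
    + apply (image_directed le1); auto. apply (mcp_mono le1 le2 f Hr Hf).
    + apply Hf; auto.
  - intros x Bx. apply hat_sub. exists x; auto.
Qed.

Definition leP (P Q : Prop) : Prop := P -> Q.

Lemma Prop_dcpo : is_dcpo leP.
Proof.
  split; [split; [|split]|].
  - intros x H; exact H.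
  - intros x y H1 H2. apply propositional_extensionality; split; auto.
  - intros x y z H1 H2 H; auto.
  - intros D HD. exists (exists P, D P /\ P). split.
    + intros P DP HP. exists P; auto.
    + intros u Hu [P [DP HP]]. exact (Hu P DP HP).
Qed.

Definition leS {Y} (le : Y -> Y -> Prop) (C : Y -> Prop) (a b : {y | C y}) : Prop :=
  le (proj1_sig a) (proj1_sig b).

Lemma sub_dcpo {Y} (le : Y -> Y -> Prop) (C : Y -> Prop) :
  is_dcpo le -> dsup_closed le C -> is_dcpo (leS le C).
Proof.
  intros [[Hr [Ha Ht]] Hs] HC. split; [split; [|split]|].
  - intros x; apply Hr.
  - intros [x Hx] [y Hy]; unfold leS; simpl. intros H1 H2.
    assert (x = y) by auto. subst. f_equal. apply proof_irrelevance.
  - intros x y z; unfold leS; eauto.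
  - intros D HD.
    assert (HD' : directed le (image (@proj1_sig _ _) D)).
    { apply (image_directed (leS le C)); auto. }
    destruct (Hs _ HD') as [s Hsup].
    assert (Cs : C s).
    { apply (HC _ (fun y H => match H with ex_intro _ d (conj _ e) =>
              eq_ind _ C (proj2_sig d) _ e end) HD' s Hsup). }
    exists (exist _ s Cs). destruct Hsup as [Hu Hl]. split.
    + intros d Dd. unfold leS; simpl. apply Hu. exists d; auto.
    + intros u Hu'. unfold leS; simpl. apply Hl. intros w [d [Dd <-]]. apply Hu'; auto.
Qed.

Section Ext.
Context (X : Type) (leX : X -> X -> Prop) (HX : is_partial_order leX)
  (Y : Type) (leY : Y -> Y -> Prop) (HY : is_dcpo leY) (j : X -> Y)
  (Hd : dense leY (image j (fun _ => True)))
  (HB : forall B : X -> Prop, has_tip leY (image j B) ->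
     forall a : X, hat_closure leY (image j B) (j a) <-> hat_closure leX B a)
  (Z : Type) (leZ : Z -> Z -> Prop) (HZ : is_dcpo leZ) (T : X -> Z)
  (HT : Mcp leX leZ T).

Definition W y z B := tipm leY (image j B) y /\ tipm leZ (image T B) z.
Definition PP y z := exists B, W y z B.

Lemma PP_mono y z y' z' : PP y z -> PP y' z' -> leY y y' -> leZ z z'.
Proof.
  destruct HX as [HrX _]. destruct HY as [[HrY [HaY HtY]] _].
  destruct HZ as [[HrZ [HaZ HtZ]] _].
  intros [B [HjB HTB]] [B' [HjB' HTB']] Hyy.
  destruct HTB as [Hz _]. apply Hz. apply down_closed.
  intros w [b [Bb <-]].
  assert (H1 : hat_closure leX B' b).
  { apply (HB B' (tipm_has _ _ _ HjB')). apply (proj2 (tip_hat leY _ y' HtY HjB' _)).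
    apply HtY with y; auto. apply (proj2 HjB). apply dcl_sub. exists b; auto. }
  apply (proj1 (tip_hat leZ _ _ HtZ HTB' (T b))). apply (hat_image leX); auto.
Qed.

Lemma PP_fun y z z' : PP y z -> PP y z' -> z = z'.
Proof.
  destruct HY as [[HrY _] _]. destruct HZ as [[_ [HaZ _]] _].
  intros H1 H2. apply HaZ; apply (PP_mono y _ y); auto.
Qed.

Definition Zs (D : Y -> Prop) := fun z => exists d, D d /\ PP d z.

Lemma Zs_directed D : directed leY D -> (forall d, D d -> exists z, PP d z) ->
  directed leZ (Zs D).
Proof.
  destruct HZ as [[HrZ [HaZ HtZ]] _].
  intros HD Hdom l. induction l as [|a l IH]; intros Hl.
  - destruct (HD nil) as [d [Dd _]]. intros x [].
    destruct (Hdom d Dd) as [z Hz]. exists z. split; [exists d; auto| intros x []].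
  - destruct (Hl a (or_introl eq_refl)) as [e [De Pe]].
    destruct IH as [z [[d [Dd Pd]] Hz]]. intros x Hx; apply Hl; right; auto.
    destruct (HD (e :: d :: nil)) as [w [Dw Hw]].
    intros x [<-|[<-|[]]]; auto.
    destruct (Hdom w Dw) as [zw Pw].
    exists zw. split; [exists w; auto|].
    intros x [<-|Hx].
    + apply (PP_mono e _ w); auto. apply Hw. left; auto.
    + apply HtZ with z; auto. apply (PP_mono d _ w); auto. apply Hw. right; left; auto.
Qed.

Lemma PP_sup D s zs : directed leY D -> (forall d, D d -> exists z, PP d z) ->
  is_sup leY D s -> is_sup leZ (Zs D) zs -> PP s zs.
Proof.
  destruct HY as [[HrY [HaY HtY]] _].
  destruct HZ as [[HrZ [HaZ HtZ]] _].
  intros HD Hdom [Hsu Hsl] [Hzu Hzl].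
  set (B := fun x => exists d z B', D d /\ W d z B' /\ B' x).
  exists B. split.
  - split.
    + apply (dcl_closed leY _ D); auto; [|split; auto].
      intros d Dd. destruct (Hdom d Dd) as [z [B' HW]].
      apply (dcl_mono leY (image j B')).
      * intros w [x [Bx <-]]. exists x. split; auto. exists d, z, B'; auto.
      * apply (proj1 (proj1 HW)).
    + apply dcl_min; [apply down_closed|].
      intros w [x [[d [z [B' [Dd [HW Bx]]]]] <-]].
      apply HtY with d; auto. apply (proj2 (proj1 HW)). apply dcl_sub. exists x; auto.
  - split.
    + apply (dcl_closed leZ _ (Zs D)); auto; [| apply Zs_directed; auto | split; auto].
      intros z [d [Dd [B' HW]]].
      apply (dcl_mono leZ (image T B')).
      * intros w [x [Bx <-]]. exists x. split; auto. exists d, z, B'; auto.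
      * apply (proj1 (proj2 HW)).
    + apply dcl_min; [apply down_closed|].
      intros w [x [[d [z [B' [Dd [HW Bx]]]]] <-]].
      apply HtZ with z; auto.
      * apply (proj2 (proj2 HW)). apply dcl_sub. exists x; auto.
      * apply Hzu. exists d. split; auto. exists B'; auto.
Qed.

Lemma PP_j x : PP (j x) (T x).
Proof.
  destruct HY as [[HrY [HaY HtY]] _].
  destruct HZ as [[HrZ [HaZ HtZ]] _].
  exists (fun b => b = x). split; apply tipm_of.
  - exists x; auto.
  - intros w [b [-> <-]]; auto.
  - exists x; auto.
  - intros w [b [-> <-]]; auto.
Qed.

Lemma PP_dom y : exists z, PP y z.
Proof.
  apply (Hd y (fun y => exists z, PP y z)).
  - intros D HD Hdir s Hs.
    destruct (proj2 HZ (Zs D) (Zs_directed D Hdir HD)) as [zs Hzs].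
    exists zs. apply (PP_sup D); auto.
  - intros w [x [_ <-]]. exists (T x). apply PP_j.
Qed.

Definition Tb (y : Y) : Z := proj1_sig (constructive_indefinite_description _ (PP_dom y)).

Lemma Tb_spec y : PP y (Tb y).
Proof. unfold Tb. destruct constructive_indefinite_description; auto. Qed.

Lemma Tb_j x : Tb (j x) = T x.
Proof. apply (PP_fun (j x)); [apply Tb_spec | apply PP_j]. Qed.

Lemma Tb_mcp : Mcp leY leZ Tb.
Proof.
  intros D s Hdir Hs.
  assert (Hdom : forall d, D d -> exists z, PP d z) by (intros; apply PP_dom).
  destruct (proj2 HZ (Zs D) (Zs_directed D Hdir Hdom)) as [zs Hzs].
  assert (E : Tb s = zs) by (apply (PP_fun s); [apply Tb_spec | apply (PP_sup D); auto]).
  rewrite E. apply (is_sup_ext leZ (Zs D)); auto.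
  intros z. split.
  - intros [d [Dd Pd]]. exists d. split; auto. apply (PP_fun d); auto. apply Tb_spec.
  - intros [d [Dd <-]]. exists d. split; auto. apply Tb_spec.
Qed.

Lemma Tb_unique (Tb' : Y -> Z) : Mcp leY leZ Tb' -> (forall x, Tb' (j x) = T x) ->
  forall y, Tb' y = Tb y.
Proof.
  intros HT' Hj y. apply (Hd y (fun y => Tb' y = Tb y)).
  - intros D HD Hdir s Hs.
    apply (sup_unique leZ (image Tb' D)). apply (proj1 (proj2 (proj1 HZ))).
    + apply HT'; auto.
    + apply (is_sup_ext leZ (image Tb D)); [| apply Tb_mcp; auto].
      intros z; split; intros [d [Dd <-]]; exists d; split; auto;
        rewrite (HD d Dd); auto.
  - intros w [x [_ <-]]. rewrite Hj, Tb_j; auto.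
Qed.

End Ext.

Theorem mainTheorem3 (X : Type) (leX : X -> X -> Prop) (HX : is_partial_order leX)
  (Y : Type) (leY : Y -> Y -> Prop) (HY : is_dcpo leY) (j : X -> Y) :
  directed_completion leX leY j <->
  (dense leY (image j (fun _ => True)) /\
   forall B : X -> Prop, has_tip leY (image j B) ->
     forall a : X, hat_closure leY (image j B) (j a) <-> hat_closure leX B a).
Proof.
  pose proof HX as [HrX [HaX HtX]]. pose proof HY as [[HrY [HaY HtY]] HsY].
  split.
  - intros [_ [Hjm Hext]]. split.
    +
      set (C := dclosure leY (image j (fun _ => True))).
      assert (HCc : dsup_closed leY C) by apply dcl_closed.
      pose proof (sub_dcpo leY C HY HCc) as HZ.
      assert (HjC : forall x, C (j x)).
      { intros x. apply dcl_sub. exists x; auto. }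
      set (j' := fun x => exist C (j x) (HjC x)).
      assert (Hj'm : Mcp leX (leS leY C) j').
      { intros D s HD Hs. destruct (Hjm D s HD Hs) as [Hub Hlst]. split.
        - intros w [d [Dd <-]]. unfold leS; simpl. apply Hub. exists d; auto.
        - intros u Hu. unfold leS; simpl. apply Hlst. intros w [d [Dd <-]].
          apply (Hu (j' d)). exists d; auto. }
      destruct (Hext _ (leS leY C) HZ j' Hj'm) as [Tb0 [[HTbm HTbj] _]].
      set (T1 := fun y => proj1_sig (Tb0 y)).
      assert (HT1m : forall x y, leY x y -> leY (T1 x) (T1 y)).
      { intros x y H. apply (mcp_mono leY (leS leY C) Tb0 HrY HTbm x y H). }
      assert (HT1 : Mcp leY leY T1).
      { intros D s Hdir Hs.
        destruct (HTbm D s Hdir Hs) as [Hub Hl].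
        assert (Hd1 : directed leY (image T1 D)) by (apply (image_directed leY); auto).
        destruct (HsY _ Hd1) as [t [Htu Htl]].
        assert (Ct : C t).
        { apply (HCc (image T1 D)); auto; [| split; auto].
          intros w [d [Dd <-]]. apply proj2_sig. }
        assert (H1 : leY (T1 s) t).
        { apply (Hl (exist C t Ct)). intros w [d [Dd <-]]. unfold leS; simpl.
          apply Htu. exists d; auto. }
        split.
        - intros w [d [Dd <-]]. apply (Hub (Tb0 d)). exists d; auto.
        - intros u Hu. apply HtY with t; auto. }
      assert (Hid : Mcp leY leY (fun y => y)).
      { intros D s _ Hs. apply (is_sup_ext leY D); auto.
        intros x; split; [intros Dx; exists x; auto | intros [d [Dd <-]]; auto]. }
      destruct (Hext Y leY HY j Hjm) as [Tb1 [_ Huniq]].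
      intros y.
      assert (E1 : T1 y = Tb1 y).
      { apply Huniq; auto. intros x. unfold T1. rewrite HTbj. reflexivity. }
      assert (E2 : y = Tb1 y).
      { apply (Huniq (fun y => y)); auto. }
      rewrite E2, <- E1. apply proj2_sig.
    + intros B _ a. split.
      * intros H.
        set (T := fun x => ~ hat_closure leX B x).
        assert (HT : Mcp leX leP T).
        { intros D s HD Hs. split.
          - intros P [d [Dd <-]]. unfold leP, T. intros Hnd Hs'. apply Hnd.
            apply (hat_lower leX B s); auto. apply (proj1 Hs); auto.
          - intros u Hu Hns. apply NNPP; intro Hnu. apply Hns.
            apply (hat_closed leX B D); auto. intros d Dd. apply NNPP. intro Hnd.
            apply Hnu. apply (Hu (T d)); [exists d; auto | exact Hnd]. }
        destruct (Hext Prop leP Prop_dcpo T HT) as [Tb0 [[HTbm HTbj] _]].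
        assert (HS : (fun y => ~ Tb0 y) (j a)).
        { apply H.
          - intros x y Hx Hyx HTy. apply Hx.
            exact (mcp_mono leY leP Tb0 HrY HTbm y x Hyx HTy).
          - intros D HDS Hdir s Hs HTs. destruct (HTbm D s Hdir Hs) as [_ Hl].
            apply (Hl False); auto. intros P [d [Dd <-]]. exact (HDS d Dd).
          - intros y [b [Bb <-]]. rewrite HTbj. unfold T. intro H'. apply H'.
            apply hat_sub; auto. }
        simpl in HS. rewrite HTbj in HS. unfold T in HS. apply NNPP; exact HS.
      * intros H. apply (hat_image leX); auto.
  - intros [Hd HB].
    assert (Hjmono : forall x y, leX x y -> leY (j x) (j y)).
    { intros x y Hxy.
      assert (Htip : tipm leY (image j (fun b => b = y)) (j y)).
      { apply tipm_of. exists y; auto. intros w [b [-> <-]]; auto. }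
      apply (proj1 (tip_hat leY _ _ HtY Htip (j x))).
      apply (HB _ (tipm_has _ _ _ Htip)).
      apply (hat_lower leX _ y); auto. apply hat_sub; auto. }
    assert (Hjm : Mcp leX leY j).
    { intros D s Hdir Hs.
      assert (Hd1 : directed leY (image j D)) by (apply (image_directed leX); auto).
      destruct (HsY _ Hd1) as [t Ht].
      assert (Htip : tipm leY (image j D) t).
      { split.
        - apply (dcl_closed leY _ (image j D)); auto. apply dcl_sub.
        - apply dcl_min; [apply down_closed | apply (proj1 Ht)]. }
      assert (Hst : leY (j s) t).
      { apply (proj1 (tip_hat leY _ _ HtY Htip (j s))).
        apply (HB _ (tipm_has _ _ _ Htip)).
        apply (hat_closed leX D D); auto. apply hat_sub. }
      split.
      - intros w [d [Dd <-]]. apply Hjmono. apply (proj1 Hs); auto.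
      - intros u Hu. apply HtY with t; auto. apply (proj2 Ht); auto. }
    split; [exact HY | split; [exact Hjm |]].
    intros Z leZ HZ T HT.
    exists (Tb X leX HX Y leY HY j Hd HB Z leZ HZ T HT). split; [split|].
    + apply Tb_mcp.
    + apply Tb_j.
    + apply Tb_unique.
Qed.
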